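(* Let $p$ be a polynomial in one real variable (with real coefficients) all of whose roots are negative real numbers and whose leading coefficient is positive. Then $p(n)>0$ for all $n\in\mathbb Z_+$ and $\{1/p(n)\}_{n=0}^\infty$ is a Hausdorff moment sequence.
   Context: A sequence $\{a_n\}_{n\ge0}$ of reals is a Hausdorff moment sequence if there is a positive Borel measure $\mu$ on $[0,1]$ with $a_n=\int_{[0,1]}x^n\,d\mu(x)$ for all $n\in\mathbb Z_+$. *)

(* Defs.v *)
From mathcomp Require Import all_boot all_order all_algebra.
From mathcomp Require Import all_classical all_reals all_analysis.
From mathcomp Require Import complex.
Set Implicit Arguments. Unset Strict Implicit. Unset Printing Implicit Defensive.
Import Order.TTheory GRing.Theory Num.Theory.
Local Open Scope ring_scope.
Local Open Scope classical_set_scope.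

(* A (positive) Borel measure on [0,1] is represented as a measure on the Borel
   sets of R integrated over [0,1] (equivalently, its restriction to [0,1]). *)
Definition hausdorff_moment_seq (R : realType) (a : nat -> R) : Prop :=
  exists mu : {measure set R -> \bar R},
    forall n : nat, ((a n)%:E = \int[mu]_(x in `[0%R, 1%R]) (x ^+ n)%:E)%E.

Definition all_roots_negative_real (R : realType) (p : {poly R}) : Prop :=
  forall z : R[i], root (map_poly (real_complex R) p) z ->
    exists a : R, a < 0 /\ z = real_complex R a.

(* Main.v *)
Require Import Defs.
From HB Require Import structures.
From mathcomp Require Import all_boot all_order all_algebra.
From mathcomp Require Import all_classical all_reals all_analysis.
From mathcomp Require Import complex.
From mathcomp Require Import measurable_realfun.
Set Implicit Arguments. Unset Strict Implicit. Unset Printing Implicit Defensive.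
Import Order.TTheory GRing.Theory Num.Theory.
Import numFieldNormedType.Exports.
Local Open Scope classical_set_scope.
Local Open Scope ring_scope.
Section A.
Variable R : realType.
Notation mu := (@lebesgue_measure R).

Lemma int_powR (r : R) : 0 < r ->
  (\int[mu]_(u in `[0%R, 1%R]) (u `^ r)%:E = (r + 1)^-1%:E)%E.
Proof.
move=> r0.
have r10 : 0 < r + 1 by rewrite addr_gt0.
have cont1 (s : R) : 0 < s -> (fun u : R => u `^ s) @ 1^'- --> 1 `^ s.
  move=> s0; apply/cvg_at_left_filter.
  apply: (@differentiable_continuous _ _ _ (1:R) (fun u : R => u `^ s)).
  by apply/derivable1_diffP; apply: derivable_powR; rewrite in_itv/= andbT.
have LR : derivable_oo_LRcontinuous (fun u : R => u `^ r) 0 1.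
  split.
  + by move=> x; rewrite in_itv/= => /andP[x0 _]; apply: derivable_powR; rewrite in_itv/= andbT.
  + rewrite powR0 ?gt_eqF//; exact: powR_cvg0.
  + exact: cont1.
rewrite (@continuous_FTC2 _ (fun u : R => u `^ r) (fun u => u `^ (r + 1) / (r + 1)) 0 1) //.
- rewrite powR1 powR0 ?mul0r ?sube0 ?mul1r //; exact: lt0r_neq0.
- by have := derivable_oo_LRcontinuous_within LR.
- split.
  + move=> x; rewrite in_itv/= => /andP[x0 _].
    apply: derivableM => //; apply: derivable_powR; rewrite in_itv/= andbT //.
  + apply: cvgMr_tmp; rewrite powR0; [exact: powR_cvg0|exact: lt0r_neq0].
  + by apply: cvgMr_tmp; exact: cont1.
- move=> x; rewrite in_itv/= => /andP[x0 _].
  rewrite derive1Mr; last by apply: derivable_powR; rewrite in_itv/= andbT.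
  rewrite powR_derive1; last by rewrite in_itv/= andbT.
  by rewrite addrK mulrAC divff ?mul1r //; exact: lt0r_neq0.
Qed.

Lemma int_powR0 (r : R) : 0 <= r ->
  (\int[mu]_(u in `[0%R, 1%R]) (u `^ r)%:E = (r + 1)^-1%:E)%E.
Proof.
rewrite le_eqVlt => /orP[/eqP <-|]; last exact: int_powR.
under eq_integral do rewrite powRr0.
by rewrite integral_cst//= mul1e lebesgue_measure_itv/= lte01 oppr0 adde0 add0r invr1.
Qed.

Definition LT := measurableTypeR R.

Definition phi (b : R) (z : R * LT) : R :=
  z.1 * (\1_`[0%R, 1%R] z.1 * (z.2 `^ b^-1) + (1 - \1_`[0%R, 1%R] z.1)).

Lemma measurable_phi b : measurable_fun setT (phi b).
Proof.
apply: measurable_funM; first exact: measurable_fst.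
apply: measurable_funD.
  apply: measurable_funM.
    apply: (@measurableT_comp _ _ _ _ _ _ (\1_`[0%R, 1%R] : R -> R)) => //; exact: measurable_indic.
  apply: (@measurableT_comp _ _ _ _ _ _ (fun u : R => u `^ b^-1)) => //.
apply: measurable_funB; first exact: measurable_cst.
apply: (@measurableT_comp _ _ _ _ _ _ (\1_`[0%R, 1%R] : R -> R)) => //; exact: measurable_indic.
Qed.

HB.instance Definition _ b := isMeasurableFun.Build _ _ _ _ (phi b) (measurable_phi b).

Definition U := uniform_prob (@ltr01 R).


Lemma phiE b x u : phi b (x, u) =
  if x \in `[0%R, 1%R]%classic then x * u `^ b^-1 else x.
Proof.
rewrite /phi /= indicE; have [h|h] := boolP (x \in _); rewrite /=.
  by rewrite mul1r subrr addr0.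
by rewrite mul0r add0r subr0 mulr1.
Qed.

Lemma step (P : probability R R) (b : R) (n : nat) : 0 < b ->
  (\int[distribution (P \x U)%E (phi b)]_(x in `[0%R, 1%R]) (x ^+ n)%:E
   = (b / (n%:R + b))%:E * \int[P]_(x in `[0%R, 1%R]) (x ^+ n)%:E)%E.
Proof.
move=> b0.
set g := (fun y : R => (y ^+ n)%:E) \_ `[0%R, 1%R].
have mg : measurable_fun setT g.
  apply/(measurable_restrictT (fun y : R => (y ^+ n)%:E)) => //; apply/measurable_EFinP.
  exact: measurable_funX.
have g0 y : (0 <= g y)%E.
  rewrite /g patchE; case: ifPn => // /set_mem/=; rewrite in_itv/= => /andP[y0 _].
  by rewrite lee_fin exprn_ge0.
rewrite integral_mkcond ge0_integral_distribution // -/g.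
have mgp : measurable_fun setT (g \o phi b).
  by apply: measurableT_comp => //; exact: measurable_phi.
rewrite (fubini_tonelli1 (g \o phi b) mgp) //.
have cb : (0 <= (b / (n%:R + b))%:E)%E.
  by rewrite lee_fin divr_ge0 // ?addr_ge0 // ltW.
rewrite [X in _ = (_ * X)%E]integral_mkcond -/g -ge0_integralZl //.
apply: eq_integral => x _; rewrite /fubini_F /=.
have [x01|x01] := boolP (x \in `[0%R, 1%R]%classic); last first.
  rewrite /g patchE (negbTE x01) mule0.
  rewrite integral0_eq// => y _ /=.
  by rewrite phiE (negbTE x01) patchE (negbTE x01).
have := x01; rewrite inE /= in_itv /= => /andP[x0 x1].
rewrite integral_uniform //=.
rewrite subr0 invr1 mul1e.
transitivity (\int[lebesgue_measure]_(u in `[0%R, 1%R]) ((x ^+ n)%:E * (u `^ (n%:R / b))%:E))%E.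
  apply: eq_integral => u; rewrite inE /= in_itv /= => /andP[u0 u1].
  have pu0 : 0 <= u `^ b^-1 by exact: powR_ge0.
  have pu1 : u `^ b^-1 <= 1.
    have [->|u0'] := eqVneq u 0; first by rewrite powR0 // invr_eq0 lt0r_neq0.
    have up : 0 < u by rewrite lt0r u0' u0.
    rewrite -[leRHS](powRr0 u); apply: ger_powR; first by rewrite up u1.
    by rewrite invr_ge0 ltW.
  rewrite phiE x01 /g patchE ifT; last first.
    by rewrite inE /= in_itv /= mulr_ge0 //= mulr_ile1.
  by rewrite -EFinM exprMn -(powR_mulrn _ pu0) -powRrM (mulrC b^-1).
rewrite ge0_integralZl_EFin //; last 3 first.
- by move=> u _; rewrite lee_fin powR_ge0.
- apply/measurable_EFinP; apply: measurable_funTS; exact: measurable_powR.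
- exact: exprn_ge0.
rewrite [X in (_ * X)%E](_ : _ = ((n%:R / b + 1)^-1)%:E); last first.
  by apply: int_powR0; rewrite divr_ge0 // ltW.
have bn0 : b != 0 by exact: lt0r_neq0.
have -> : n%:R / b + 1 = (n%:R + b) / b by rewrite mulrDl divff.
rewrite invf_div /g patchE x01 -EFinM muleC -EFinM.
by [].
- exact: (measurable_fun_pair2 x mgp).
- by move=> z; exact: g0.
Qed.


Lemma main_ind (k : nat) (p : {poly R}) : size p = k ->
  all_roots_negative_real p -> 0 < lead_coef p ->
  (forall n : nat, 0 < p.[n%:R]) /\
  exists (P : probability R R) (c : R), 0 <= c /\ forall n : nat,
   ((p.[n%:R])^-1)%:E = (c%:E * \int[P]_(x in `[0%R, 1%R]) (x ^+ n)%:E)%E.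
Proof.
elim: k p => [|k IH] p sp hroots hlead.
  by move/eqP: sp hlead; rewrite size_poly_eq0 => /eqP ->; rewrite lead_coef0 ltxx.
have [s1|s2] := leqP (size p) 1.
  have pE := size1_polyC s1.
  have lc : lead_coef p = p`_0.
    by rewrite {1}pE lead_coefC.
  have hp n : p.[n%:R] = p`_0 by rewrite {1}pE hornerC.
  split; first by move=> n; rewrite hp -lc.
  exists (\d_(1:R) : probability R R), (p`_0)^-1; split.
    by rewrite invr_ge0 -lc ltW.
  move=> n; rewrite hp integral_dirac; last 2 first.
  - exact: measurable_itv.
  - apply/measurable_EFinP; apply: measurable_funTS; exact: measurable_funX.
  rewrite /= diracE mem_set /=; last by rewrite in_itv /= ler01 lexx.
  by rewrite expr1n mul1e mule1.
have [z rz] : exists z, root (map_poly (real_complex R) p) z.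
  by apply/closed_rootP; rewrite size_map_poly sp; move: s2; rewrite sp; case: (k).
have [a [a0 za]] := hroots z rz.
have ra : root p a.
  move: rz; rewrite za /root horner_map fmorph_eq0; exact.
have [q pq] := factor_theorem p a ra.
have q0 : q != 0.
  by apply: contraTneq s2 => q0; rewrite pq q0 mul0r size_poly0.
have sq : size q = k.
  move: sp; rewrite pq size_Mmonic ?monicXsubC // size_XsubC addn2 /=.
  by case.
have lq : lead_coef q = lead_coef p by rewrite pq lead_coef_Mmonic ?monicXsubC.
have rq : all_roots_negative_real q.
  move=> w rw; apply: hroots.
  by rewrite /root pq rmorphM /= hornerM (eqP rw) mul0r.
have lq0 : 0 < lead_coef q by rewrite lq.
have [qpos [P [c [c0 hq]]]] := IH q sq rq lq0.
set b := - a.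
have b0 : 0 < b by rewrite oppr_gt0.
have hp n : p.[n%:R] = q.[n%:R] * (n%:R + b).
  by rewrite pq hornerM hornerXsubC.
have nb0 n : 0 < (n%:R : R) + b by apply: ltr_wpDl.
split; first by move=> n; rewrite hp mulr_gt0.
exists (distribution (P \x U)%E (phi b)), (c / b); split.
  by rewrite divr_ge0 // ltW.
move=> n; rewrite step // hp invfM EFinM hq.
rewrite muleA -EFinM muleC muleA -EFinM; congr (_%:E * _)%E.
have bn0 : b != 0 by exact: lt0r_neq0.
by rewrite mulrA divfK // mulrC.
Qed.

End A.

Theorem proposition3p2 (R : realType) (p : {poly R}) :
  all_roots_negative_real p -> 0 < lead_coef p ->
  (forall n : nat, 0 < p.[n%:R]) /\
  hausdorff_moment_seq (fun n : nat => (p.[n%:R])^-1).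
Proof.
move=> hr hl.
have [pos [P [c [c0 hP]]]] := main_ind (erefl (size p)) hr hl.
split => //.
exists (mscale (NngNum c0) P) => n.
rewrite hP ge0_integral_mscale //.
- apply/measurable_EFinP; apply: measurable_funTS; exact: measurable_funX.
- move=> x; rewrite /= in_itv /= => /andP[x0 _].
  by rewrite lee_fin exprn_ge0.
Qed.
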